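(* Let $\alpha,\beta\in(0,\pi/2)$ and consider the system on $S^2$ described in the context. There is no abnormal extremal pair $(x,\lambda)$ with $x(0)=N=(0,0,1)$ whose trajectory is bang-bang.
   Context: The system is $\dot x=Fx+u_1G_1x+u_2G_2x$ on the unit sphere $S^2\subset\mathbb R^3$, measurable controls $|u_i|\le1$, with $F=\cos\alpha\begin{pmatrix}0&-1&0\\1&0&0\\0&0&0\end{pmatrix}$, $G_1=\sin\alpha\sin\beta\begin{pmatrix}0&0&0\\0&0&-1\\0&1&0\end{pmatrix}$, $G_2=\sin\alpha\cos\beta\begin{pmatrix}0&0&-1\\0&0&0\\1&0&0\end{pmatrix}$. An extremal pair: trajectory $x$ with control $u$ on $[0,T]$, Lipschitz row vector $\lambda(t)\in\mathbb R^3$ with $\lambda(t)\cdot x(t)=0$, $\lambda(t)\ne0$, and constant $\lambda_0\le0$, such that a.e. $\dot\lambda=-\lambda(F+u_1G_1+u_2G_2)$, $u(t)$ maximizes $\lambda Fx+u_1\lambda G_1x+u_2\lambda G_2x+\lambda_0$ over $[-1,1]^2$, and the maximum is $0$. It is abnormal if $\lambda_0=0$. Bang-bang: $u$ is a finite concatenation of arcs on which it is a.e. constant in $\{-1,1\}^2$. *)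

(* Defs.v *)
From mathcomp Require Import all_boot all_algebra.
From mathcomp Require Import all_classical all_reals all_analysis.
Import GRing.Theory Num.Theory.
Set Implicit Arguments.
Unset Strict Implicit.
Unset Printing Implicit Defensive.
Local Open Scope ring_scope.
Local Open Scope classical_set_scope.

Section Sphere.
Variable R : realType.

Definition i0 : 'I_3 := inord 0.
Definition i1 : 'I_3 := inord 1.
Definition i2 : 'I_3 := inord 2.

Definition Fmx (a : R) : 'M[R]_3 :=
  cos a *: (delta_mx i1 i0 - delta_mx i0 i1).
Definition G1mx (a b : R) : 'M[R]_3 :=
  (sin a * sin b) *: (delta_mx i2 i1 - delta_mx i1 i2).
Definition G2mx (a b : R) : 'M[R]_3 :=
  (sin a * cos b) *: (delta_mx i2 i0 - delta_mx i0 i2).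

Definition Amx (a b v1 v2 : R) : 'M[R]_3 :=
  Fmx a + v1 *: G1mx a b + v2 *: G2mx a b.

Definition north : 'cV[R]_3 := delta_mx i2 0.

Definition ham (a b : R) (lam0 : R) (lam : 'rV[R]_3) (x : 'cV[R]_3)
    (v1 v2 : R) : R :=
  (lam *m (Amx a b v1 v2 *m x)) 0 0 + lam0.

(* Trajectories and costates are Lipschitz on [0,T]
   (hence absolutely continuous) and satisfy the ODEs almost everywhere. *)
Definition extremal_pair (a b T : R) (x : R -> 'cV[R]_3) (u1 u2 : R -> R)
    (lam : R -> 'rV[R]_3) (lam0 : R) : Prop :=
  [/\ 0 < T,
      [/\ measurable_fun `[0, T] u1, measurable_fun `[0, T] u2 &
          forall t, 0 <= t <= T -> `|u1 t| <= 1 /\ `|u2 t| <= 1],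
      [/\ [lipschitz x t | t in `[0, T]],
          (forall t, 0 <= t <= T -> \sum_(i < 3) (x t i 0) ^+ 2 = 1) &
          (\forall t \ae (@lebesgue_measure R), `]0, T[ t ->
             derivable x t 1 /\ 'D_1 x t = Amx a b (u1 t) (u2 t) *m x t)],
      [/\ [lipschitz lam t | t in `[0, T]],
          (forall t, 0 <= t <= T -> (lam t *m x t) 0 0 = 0),
          (forall t, 0 <= t <= T -> lam t != 0) &
          (\forall t \ae (@lebesgue_measure R), `]0, T[ t ->
             derivable lam t 1 /\
             'D_1 lam t = - (lam t *m Amx a b (u1 t) (u2 t)))] &
      lam0 <= 0 /\
      (\forall t \ae (@lebesgue_measure R), `]0, T[ t ->
         (forall v1 v2, `|v1| <= 1 -> `|v2| <= 1 ->
            ham a b lam0 (lam t) (x t) v1 v2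
              <= ham a b lam0 (lam t) (x t) (u1 t) (u2 t)) /\
         ham a b lam0 (lam t) (x t) (u1 t) (u2 t) = 0)].

Definition abnormal_extremal_pair (a b T : R) (x : R -> 'cV[R]_3)
    (u1 u2 : R -> R) (lam : R -> 'rV[R]_3) : Prop :=
  extremal_pair a b T x u1 u2 lam 0.

Definition bang_bang (T : R) (u1 u2 : R -> R) : Prop :=
  exists (k : nat) (tau : nat -> R),
    [/\ tau 0%N = 0, tau k = T,
        (forall i, (i < k)%N -> tau i < tau i.+1) &
        forall i, (i < k)%N -> exists c1 c2 : R,
          [/\ c1 = 1 \/ c1 = -1, c2 = 1 \/ c2 = -1 &
              (\forall t \ae (@lebesgue_measure R), `]tau i, tau i.+1[ t ->
                 u1 t = c1 /\ u2 t = c2)]].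

End Sphere.

(* Main.v *)
Require Import Defs.
From mathcomp Require Import all_boot all_algebra.
From mathcomp Require Import all_classical all_reals all_analysis.
From mathcomp Require Import ring lra.
Import order.Order.TTheory GRing.Theory Num.Theory numFieldNormedType.Exports.
Local Open Scope ring_scope.
Local Open Scope classical_set_scope.

Section S.
Variable R : realType.

Lemma hamE (A : 'M[R]_3) (L : 'rV[R]_3) (X : 'cV[R]_3) :
  (L *m (A *m X)) 0 0 = \sum_j \sum_k L 0 j * (A j k * X k 0).
Proof. by rewrite mxE; apply: eq_bigr => j _; rewrite mxE mulr_sumr. Qed.

Lemma sum3 (F : 'I_3 -> R) : \sum_j F j = F i0 + F i1 + F i2.
Proof.
rewrite !big_ord_recr big_ord0 /= add0r.
by congr (F _ + F _ + F _); apply/val_inj; rewrite /= inordK.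
Qed.

Lemma i01 : (i0 == i1) = false. Proof. by rewrite -val_eqE /= !inordK. Qed.
Lemma i02 : (i0 == i2) = false. Proof. by rewrite -val_eqE /= !inordK. Qed.
Lemma i12 : (i1 == i2) = false. Proof. by rewrite -val_eqE /= !inordK. Qed.
Lemma i10 : (i1 == i0) = false. Proof. by rewrite -val_eqE /= !inordK. Qed.
Lemma i20 : (i2 == i0) = false. Proof. by rewrite -val_eqE /= !inordK. Qed.
Lemma i21 : (i2 == i1) = false. Proof. by rewrite -val_eqE /= !inordK. Qed.

Lemma ham_north a b v1 v2 (L : 'rV[R]_3) :
  (L *m (Amx a b v1 v2 *m north R)) 0 0 =
  - (v2 * (sin a * cos b)) * L 0 i0 - (v1 * (sin a * sin b)) * L 0 i1.
Proof.
rewrite hamE !sum3.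
rewrite /Amx /Fmx /G1mx /G2mx /north !mxE !eqxx ?i01 ?i02 ?i12 ?i10 ?i20 ?i21 /=.
ring.
Qed.

Lemma lam_north (L : 'rV[R]_3) : (L *m north R) 0 0 = L 0 i2.
Proof.
rewrite mxE sum3 /north !mxE !eqxx ?i01 ?i02 ?i12 ?i10 ?i20 ?i21 /=; ring.
Qed.

Lemma entry_le (m n : nat) (A : 'M[R]_(m, n)) i j : `|A i j| <= `|A|.
Proof.
have -> : `|A| = mx_norm A by [].
rewrite mx_normrE.
exact: (le_bigmax _ (fun ij : 'I_m * 'I_n => `|A ij.1 ij.2|) (i, j)).
Qed.

Lemma lip_entry (m n : nat) (f : R -> 'M[R]_(m, n)) (T : R) i j :
  0 < T -> [lipschitz f t | t in `[0, T]] -> (fun t => f t i j) @ (0:R)^'+ --> (f 0 i j : R).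
Proof.
move=> T0 /pinfty_ex_gt0 [M M0 HM].
apply/cvgrPdist_lt => e e0.
near=> t.
have t0 : 0 < t by near: t; apply: nbhs_right_gt.
have tT' : t < T by near: t; apply: nbhs_right_lt.
have tT : `[0, T] t /\ `[0, T] (0 : R).
  by rewrite /= !in_itv /=; split; apply/andP; split; lra.
have := HM (t, 0) tT => /= Hle.
have tM : t < e / M by near: t; apply: nbhs_right_lt; rewrite divr_gt0.
have := @entry_le m n (f t - f 0) i j; rewrite !mxE distrC => H.
rewrite subr0 gtr0_norm // in Hle.
rewrite ltr_pdivlMr // in tM.
apply: (le_lt_trans H); apply: (le_lt_trans Hle); by rewrite mulrC.
Unshelve. all: by end_near. Qed.

Lemma cvg_sum3 (F : set_system R) {FF : Filter F} (f : 'I_3 -> R -> R) (c : 'I_3 -> R) :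
  (forall i, f i t @[t --> F] --> c i) -> (\sum_i f i t) @[t --> F] --> \sum_i c i.
Proof.
move=> H; rewrite sum3; under eq_cvg do rewrite sum3.
exact: (cvgD (cvgD (H i0) (H i1)) (H i2)).
Qed.

Lemma ham_cvg a b v1 v2 (T : R) (x : R -> 'cV[R]_3) (lam : R -> 'rV[R]_3) :
  0 < T -> [lipschitz x t | t in `[0, T]] -> [lipschitz lam t | t in `[0, T]] ->
  ham a b 0 (lam t) (x t) v1 v2 @[t --> (0:R)^'+] --> ham a b 0 (lam 0) (x 0) v1 v2.
Proof.
move=> T0 xl ll; rewrite /ham addr0 hamE.
under eq_cvg do rewrite addr0 hamE.
apply: cvg_sum3 => j; apply: cvg_sum3 => k.
apply: cvgM; first exact: lip_entry ll.
apply: cvgM; first exact: cvg_cst.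
exact: lip_entry xl.
Qed.

End S.

Theorem proposition3 (R : realType) (alpha beta : R) :
  0 < alpha < pi / 2 -> 0 < beta < pi / 2 ->
  ~ (exists (T : R) (x : R -> 'cV[R]_3) (u1 u2 : R -> R)
        (lam : R -> 'rV[R]_3),
       [/\ abnormal_extremal_pair alpha beta T x u1 u2 lam,
           x 0 = north R &
           bang_bang T u1 u2]).
Proof.
move=> ha hb [T [x [u1 [u2 [lam [[T0 _ [xlip _ _] [llip lx lnz _] [_ Hae]] x0 _]]]]]].
have sa : 0 < sin alpha by apply: sin_gt0_pihalf.
have sb : 0 < sin beta by apply: sin_gt0_pihalf.
have cb : 0 < cos beta.
  by apply: cos_gt0_pihalf; have /andP[h1 h2] := hb; apply/andP; split; lra.
set s1 := sin alpha * sin beta.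
set s2 := sin alpha * cos beta.
have s10 : 0 < s1 by rewrite mulr_gt0.
have s20 : 0 < s2 by rewrite mulr_gt0.
set l := lam 0.
have l2 : l 0 i2 = 0.
  have := lx 0; rewrite lexx ltW // x0 lam_north; by apply.
set v1 := - Num.sg (l 0 i1).
set v2 := - Num.sg (l 0 i0).
have v1b : `|v1| <= 1 by rewrite normrN normr_sg; case: (_ != _).
have v2b : `|v2| <= 1 by rewrite normrN normr_sg; case: (_ != _).
set g := fun t => ham alpha beta 0 (lam t) (x t) v1 v2.
have g0 : 0 < g 0.
  rewrite /g /ham addr0 x0 ham_north -/s1 -/s2 -/l /v1 /v2.
  have -> : - (- Num.sg (l 0 i0) * s2) * l 0 i0 - - Num.sg (l 0 i1) * s1 * l 0 i1
           = s2 * (Num.sg (l 0 i0) * l 0 i0) + s1 * (Num.sg (l 0 i1) * l 0 i1) by ring.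
  rewrite -!normrEsg.
  have [h0|h0] := eqVneq (l 0 i0) 0.
    have [h1|h1] := eqVneq (l 0 i1) 0.
      exfalso; move: (lnz 0); rewrite lexx ltW // => /(_ isT) /negP; apply.
      apply/eqP/matrixP => p q; rewrite ord1 mxE.
      case: q => [[|[|[|k]]] hq] //.
      - by have -> : Ordinal hq = i0 by apply/val_inj; rewrite /= inordK.
      - by have -> : Ordinal hq = i1 by apply/val_inj; rewrite /= inordK.
      - by have -> : Ordinal hq = i2 by apply/val_inj; rewrite /= inordK.
    rewrite h0 normr0 mulr0 add0r mulr_gt0 // normr_gt0 //.
  by rewrite ltr_wpDr ?mulr_ge0 ?normr_ge0 ?ltW // mulr_gt0 // normr_gt0.
have gc : g t @[t --> (0:R)^'+] --> g 0 := @ham_cvg R alpha beta v1 v2 T x lam T0 xlip llip.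
have Hn : \forall t \near (0:R)^'+, 0 < g t.
  by apply: cvgr_gt; [exact: gc | exact: g0].
have Hn' : nbhs (0:R) (fun t => 0 < t -> 0 < g t) := Hn.
move/nbhs_ballP: Hn' => [d d0 Hd].
case: Hae => N [mN N0 sN].
set c := Num.min d T.
have c0 : 0 < c by rewrite lt_min d0 T0.
have sub : `]0, c[ `<=` N.
  move=> t /=; rewrite in_itv /= => /andP[t0 tc].
  move: tc; rewrite lt_min => /andP[td tT].
  have [//|nN] := pselect (N t).
  have Pt : `]0, T[ t -> _ := contrapT (fun nP => nN (sN t nP)).
  have [Hmax H0] := Pt ltac:(by rewrite /= in_itv /= t0 tT).
  have := Hmax v1 v2 v1b v2b; rewrite H0 -/(g t) => gle.
  have : 0 < g t.
    apply: Hd => //; rewrite /ball /= sub0r normrN gtr0_norm //.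
  by move=> gt; exfalso; lra.
pose I : set R := `]0, c[.
have : (lebesgue_measure I <= lebesgue_measure N)%E.
  by apply: le_measure => //; rewrite inE //; exact: measurable_itv.
rewrite N0 /I lebesgue_measure_itv /=.
by rewrite lte_fin c0 oppr0 -EFinD addr0 lee_fin leNgt c0.
Qed.
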